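(* Let $M=\begin{pmatrix}a&b\\c&d\end{pmatrix}$ be a random real $2\times2$ matrix whose rows are exchangeable, i.e. $(a,b,c,d)\overset{d}{=}(c,d,a,b)$. Then $\Pr(M\text{ has both eigenvalues real})\ge\frac12$. *)

(* Defs.v *)
From HB Require Import structures.
From mathcomp Require Import all_boot all_order all_algebra.
From mathcomp Require Import all_classical all_reals all_analysis.
Set Implicit Arguments. Unset Strict Implicit. Unset Printing Implicit Defensive.
Import Order.TTheory GRing.Theory Num.Theory.
Local Open Scope ring_scope.

Definition entries4 (R : Type) (M : 'M[R]_2) : R * R * R * R :=
  (M 0 0, M 0 1, M 1 0, M 1 1).

(* M has both eigenvalues real: its characteristic polynomial splits
   into real linear factors, i.e. both (complex) eigenvalues, counted with
   multiplicity, are real numbers l1, l2. *)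
Definition both_eigenvalues_real (R : realType) (M : 'M[R]_2) : Prop :=
  exists l1 l2 : R, char_poly M = ('X - l1%:P) * ('X - l2%:P).

(* Main.v *)
Require Import Defs.
From HB Require Import structures.
From mathcomp Require Import all_boot all_order all_algebra.
From mathcomp Require Import all_classical all_reals all_analysis.
From mathcomp Require Import perm.
From mathcomp Require Import ring lra.

Import Order.TTheory GRing.Theory Num.Theory.
Local Open Scope classical_set_scope.
Local Open Scope ring_scope.

Lemma det22 (R : comNzRingType) (A : 'M[R]_2) :
  \det A = A 0 0 * A 1 1 - A 0 1 * A 1 0.
Proof.
rewrite (expand_det_row A 0) big_ord_recl big_ord1 /cofactor !det_mx11 !mxE /=.
have e1 : lift 0 0 = 1 :> 'I_2 by apply/val_inj.
have e2 : lift ord0 0 = 1 :> 'I_2 by apply/val_inj.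
have e3 : lift ord0 ord0 = 1 :> 'I_2 by apply/val_inj.
have e4 : lift (1 : 'I_2) 0 = 0 :> 'I_2 by apply/val_inj.
have e5 : ord0 = 0 :> 'I_2 by apply/val_inj.
rewrite ?e1 ?e2 ?e3 ?e4 ?e5.
rewrite expr0 expr1 mul1r; ring.
Qed.

Lemma charp22 (R : comNzRingType) (A : 'M[R]_2) :
  char_poly A = ('X - (A 0 0)%:P) * ('X - (A 1 1)%:P) - (A 0 1)%:P * (A 1 0)%:P.
Proof.
rewrite /char_poly det22 /char_poly_mx !mxE /=.
rewrite !mulr1n !mulr0n; ring.
Qed.

Lemma quad_id (S : comNzRingType) (X A B C D L1 L2 : S) :
  A + D = L1 + L2 -> A * D - B * C = L1 * L2 ->
  (X - A) * (X - D) - B * C = (X - L1) * (X - L2).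
Proof.
move=> h1 h2.
have -> : B * C = A * D - L1 * L2 by rewrite -h2; ring.
have -> : D = L1 + L2 - A by rewrite -h1; ring.
ring.
Qed.

Definition disc {R : realType} (t : R * R * R * R) : R :=
  (t.1.1.1 - t.2) ^+ 2 + 4 * t.1.1.2 * t.1.2.


Lemma disc_real (R : realType) (M : 'M[R]_2) :
  0 <= disc (entries4 M) -> both_eigenvalues_real M.
Proof.
rewrite /disc /entries4 /= => hD.
pose s := Num.sqrt ((M 0 0 - M 1 1) ^+ 2 + 4 * M 0 1 * M 1 0).
have hs : s ^+ 2 = (M 0 0 - M 1 1) ^+ 2 + 4 * M 0 1 * M 1 0 by rewrite sqr_sqrtr.
exists ((M 0 0 + M 1 1 + s) / 2), ((M 0 0 + M 1 1 - s) / 2).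
rewrite charp22; apply: quad_id.
  by rewrite -!polyCD; congr (_%:P); field.
rewrite -!rmorphM -rmorphB; congr (_%:P).
have -> : (M 0 0 + M 1 1 + s) / 2 * ((M 0 0 + M 1 1 - s) / 2) =
   ((M 0 0 + M 1 1)^+2 - s ^+ 2) / 4 by field; done.
by rewrite hs; field.
Qed.

Lemma real_disc (R : realType) (M : 'M[R]_2) :
  both_eigenvalues_real M -> 0 <= disc (entries4 M).
Proof.
move=> [l1 [l2 h]]; rewrite charp22 in h.
have h0 := congr1 (fun p => p.[0]) h.
have h1 := congr1 (fun p => p.[1]) h.
move: h0 h1; rewrite /= !hornerE /disc /entries4 /= => h0 h1.
have -> : (M 0 0 - M 1 1) ^+ 2 + 4 * M 0 1 * M 1 0 = (l1 - l2) ^+ 2.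
  have e : (1 - M 0 0) * (1 - M 1 1) - M 0 1 * M 1 0 - (- M 0 0 * - M 1 1 - M 0 1 * M 1 0) = 1 - (M 0 0 + M 1 1) by ring.
  have e' : (1 - l1) * (1 - l2) - (- l1 * - l2) = 1 - (l1 + l2) by ring.
  rewrite h0 h1 e' in e.
  have hs : M 0 0 + M 1 1 = l1 + l2 by lra.
  have hp : M 0 0 * M 1 1 - M 0 1 * M 1 0 = l1 * l2.
    by rewrite -[l1 * l2]mulrNN -h0; ring.
  have -> : (M 0 0 - M 1 1) ^+ 2 + 4 * M 0 1 * M 1 0 =
     (M 0 0 + M 1 1) ^+ 2 - 4 * (M 0 0 * M 1 1 - M 0 1 * M 1 0) by ring.
  rewrite hs hp; ring.
exact: sqr_ge0.
Qed.

Lemma disc_swap (R : realType) (M : 'M[R]_2) :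
  0 <= disc (entries4 M) \/ 0 <= disc (entries4 (xrow 0 1 M)).
Proof.
have : 0 <= disc (entries4 M) + disc (entries4 (xrow 0 1 M)).
  rewrite /disc /entries4 /= !mxE tpermL tpermR.
  have -> : forall a b c d : R, (a - d) ^+ 2 + 4 * b * c + ((c - b) ^+ 2 + 4 * d * a)
     = (a + d) ^+ 2 + (b + c) ^+ 2 by move=> *; ring.
  by rewrite addr_ge0 ?sqr_ge0.
case: (lerP 0 (disc (entries4 M))) => h; first by left.
right; lra.
Qed.

Lemma entries_mfun {d} {T : measurableType d} {R : realType} {X : T -> 'M[R]_2}
  (hX : forall i j : 'I_2, measurable_fun setT (fun w => X w i j)) :
  measurable_fun setT (fun w => entries4 (X w)).
Proof.
rewrite /entries4.
apply: measurable_fun_pair; last exact: hX.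
apply: measurable_fun_pair; last exact: hX.
by apply: measurable_fun_pair; exact: hX.
Qed.

Lemma disc_mfun (R : realType) : measurable_fun setT (@disc R).
Proof.
rewrite /disc.
have m1 : measurable_fun setT (fun t : R * R * R * R => t.1.1.1).
  by apply: measurableT_comp; [exact: measurable_fst|];
     apply: measurableT_comp; exact: measurable_fst.
have m2 : measurable_fun setT (fun t : R * R * R * R => t.1.1.2).
  by apply: measurableT_comp; [exact: measurable_snd|];
     apply: measurableT_comp; exact: measurable_fst.
have m3 : measurable_fun setT (fun t : R * R * R * R => t.1.2).
  by apply: measurableT_comp; [exact: measurable_snd| exact: measurable_fst].
have m4 : measurable_fun setT (fun t : R * R * R * R => t.2) by exact: measurable_snd.
apply: measurable_realfun.measurable_funD.
  by apply: measurable_realfun.measurable_funX; exact: measurable_realfun.measurable_funB.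
apply: measurable_realfun.measurable_funM => //.
apply: measurable_realfun.measurable_funM => //.
Qed.

Theorem mainTheorem19 (d : measure_display) (T : measurableType d)
  (R : realType) (P : probability T R) (X : T -> 'M[R]_2)
  (hX : forall i j : 'I_2, measurable_fun setT (fun w => X w i j))
  (hexch : forall A : set (R * R * R * R), measurable A ->
     P ((fun w => entries4 (X w)) @^-1` A) =
     P ((fun w => entries4 (xrow 0 1 (X w))) @^-1` A)) :
  ((1 / 2 : R)%:E <= P [set w | both_eigenvalues_real (X w)])%E.
Proof.
pose A : set (R * R * R * R) := [set t | 0 <= disc t].
have mA : measurable A.
  have := @disc_mfun R measurableT _ (measurable_itv `[(0:R), +oo[).
  rewrite setTI; congr measurable; apply/seteqP; split => t /=;
    by rewrite /A /= in_itv /= andbT.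
have hX' : forall i j : 'I_2, measurable_fun setT (fun w => xrow 0 1 (X w) i j).
  by move=> i j; under eq_fun do rewrite !mxE; exact: hX.
have mE := entries_mfun hX measurableT _ mA; rewrite setTI in mE.
have mE' := entries_mfun hX' measurableT _ mA; rewrite setTI in mE'.
have -> : [set w | both_eigenvalues_real (X w)] = (fun w => entries4 (X w)) @^-1` A.
  apply/seteqP; split => w /=; [exact: real_disc | exact: disc_real].
have hU : setT = (fun w => entries4 (X w)) @^-1` A `|` (fun w => entries4 (xrow 0 1 (X w))) @^-1` A.
  apply/seteqP; split => w // _; exact: disc_swap.
set E := (fun w => entries4 (X w)) @^-1` A in mE hU *.
set E' := (fun w => entries4 (xrow 0 1 (X w))) @^-1` A in mE' hU.
have hU' : P (E `|` E') = 1%E by rewrite -hU; exact: probability_setT.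
have h : (1 <= P E + P E')%E by rewrite -hU'; exact: measureU2.
rewrite /E' -hexch // -/E in h.
move: h; case: (P _) => [r| |] //=; last by move=> _; exact: leey.
rewrite -EFinD !lee_fin => h; lra.
Qed.
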